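(* Assume Assumption A2 and Assumption A1(p) for some $p\ge1$ (see context), and let $0<\eta_s\le\eta_{\infty,p}$ for all $s$. Then for every $t\ge1$, \[\|\rho^{\mathrm{avg}}_t\|\le\frac{\eta_t^2H_t^2}{2}\zeta_1\zeta_2,\qquad\text{where }\ \rho^{\mathrm{avg}}_t=\frac1N\sum_{c=1}^N\big(I-(I-\eta_t\bar{\mathbf A}^c)^{H_t}\big)(\theta^c_\star-\theta_\star).\]
   Context: Setting: $N$ agents, dimension $d$. For each agent $c$: distribution $\pi_c$ on $(\mathsf Z,\mathcal Z)$, measurable $\mathbf A^c:\mathsf Z\to\mathbb R^{d\times d}$, $\mathbf b^c:\mathsf Z\to\mathbb R^d$, $\bar{\mathbf A}^c=\mathbb E_{\pi_c}[\mathbf A^c(Z)]$, $\bar{\mathbf b}^c=\mathbb E_{\pi_c}[\mathbf b^c(Z)]$, $\bar{\mathbf A}=N^{-1}\sum_c\bar{\mathbf A}^c$; $\theta_\star$ solves $\bar{\mathbf A}\theta_\star=N^{-1}\sum_c\bar{\mathbf b}^c$; $\theta^c_\star$ solves $\bar{\mathbf A}^c\theta^c_\star=\bar{\mathbf b}^c$; $\varepsilon^c(z)=(\mathbf A^c(z)-\bar{\mathbf A}^c)\theta^c_\star-(\mathbf b^c(z)-\bar{\mathbf b}^c)$. Assumption A1(p): each $-\bar{\mathbf A}^c$ Hurwitz; there exist $a>0,\eta_{\infty,p}>0$, $\eta_{\infty,p}a\le1/2$, with $\mathbb E^{1/p}_{Z\sim\pi_c}[\|(I-\eta\mathbf A^c(Z))u\|^p]\le(1-\eta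 a)\|u\|$ for all $0<\eta<\eta_{\infty,p}$, $u$. Assumption A2: samples i.i.d. per agent and independent; $\max_c\sup_z\|\varepsilon^c(z)\|<\infty$, $\max_c\sup_z\max(\|\mathbf A^c(z)\|,\|\mathbf A^c(z)-\bar{\mathbf A}^c\|)<\infty$. $H_t\in\mathbb N$ are the local step numbers. $\zeta_1^2=N^{-1}\sum_c\|\bar{\mathbf A}^c(\theta^c_\star-\theta_\star)\|^2$, $\zeta_2^2=N^{-1}\sum_c\|\bar{\mathbf A}^c-\bar{\mathbf A}\|^2$. *)

(* Defs.v *)
From HB Require Import structures.
From mathcomp Require Import all_boot all_order all_algebra.
From mathcomp Require Import complex.
From mathcomp Require Import all_classical all_reals all_analysis.
Set Implicit Arguments. Unset Strict Implicit. Unset Printing Implicit Defensive.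
Import Order.TTheory GRing.Theory Num.Theory.
Local Open Scope ring_scope.
Local Open Scope classical_set_scope.

Section Defs.
Variable R : realType.

Definition vnorm (d : nat) (v : 'cV[R]_d) : R :=
  Num.sqrt (\sum_(i < d) (v i ord0) ^+ 2).

Definition opnorm (d : nat) (M : 'M[R]_d) : R :=
  sup [set r : R | exists u : 'cV[R]_d, vnorm u <= 1 /\ r = vnorm (M *m u)].

Definition hurwitz (d : nat) (M : 'M[R]_d) : Prop :=
  forall z : R[i],
    root (map_poly (fun x : R => Complex x 0) (char_poly M)) z -> complex.Re z < 0.

Definition mexp (dm : measure_display) (Z : measurableType dm)
    (P : probability Z R) (m n : nat) (F : Z -> 'M[R]_(m, n)) : 'M[R]_(m, n) :=
  \matrix_(i, j) fine (\int[P]_z (F z i j)%:E).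

End Defs.

(* Main.v *)
Require Import Defs.
From HB Require Import structures.
From mathcomp Require Import all_boot all_order all_algebra.
From mathcomp Require Import complex.
From mathcomp Require Import all_classical all_reals all_analysis.
From mathcomp Require Import ring lra.
Import Order.TTheory GRing.Theory Num.Theory.
Local Open Scope ring_scope.
Local Open Scope classical_set_scope.
Set Warnings "-all".

Section CS.
Variable R : realType.

Lemma CS_sum {n} (x y : 'I_n -> R) :
  (\sum_i x i * y i) ^+ 2 <= (\sum_i x i ^+ 2) * (\sum_i y i ^+ 2).
Proof.
set X := \sum_i x i ^+ 2; set Y := \sum_i y i ^+ 2; set S := \sum_i x i * y i.
have X0 : 0 <= X by apply: sumr_ge0 => i _; exact: sqr_ge0.
have Y0 : 0 <= Y by apply: sumr_ge0 => i _; exact: sqr_ge0.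
have [Xz|Xp] := eqVneq X 0.
  have hx : forall i, x i = 0.
    move=> i; apply/eqP; rewrite -sqrf_eq0; apply/eqP.
    have := psumr_eq0P _ Xz; rewrite /X => -> //= j _; exact: sqr_ge0.
  rewrite /S big1 ?expr0n ?mulr_ge0//= => i _; by rewrite hx mul0r.
have Xg : 0 < X by rewrite lt_neqAle eq_sym Xp X0.
set tt := S / X.
have : 0 <= \sum_i (x i * tt - y i) ^+ 2 by apply: sumr_ge0 => i _; exact: sqr_ge0.
have -> : \sum_i (x i * tt - y i) ^+ 2 = tt ^+ 2 * X - 2 * tt * S + Y.
  rewrite /X /S /Y !mulr_sumr -sumrB -big_split /=; apply: eq_bigr => i _.
  by rewrite /=; ring.
rewrite /tt => h.
have : 0 <= X * ((S / X) ^+ 2 * X - 2 * (S / X) * S + Y) by apply: mulr_ge0.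
have -> : X * ((S / X) ^+ 2 * X - 2 * (S / X) * S + Y) = X * Y - S ^+ 2.
  by field; rewrite Xp.
by rewrite subr_ge0.
Qed.

Lemma CS_abs {n} (x y : 'I_n -> R) :
  `|\sum_i x i * y i| <= Num.sqrt (\sum_i x i ^+ 2) * Num.sqrt (\sum_i y i ^+ 2).
Proof.
rewrite -sqrtrM; last by apply: sumr_ge0 => i _; exact: sqr_ge0.
rewrite -sqrtr_sqr ler_sqrt; first exact: CS_sum.
by apply: mulr_ge0; apply: sumr_ge0 => i _; exact: sqr_ge0.
Qed.

Variable d : nat.
Implicit Types u v w : 'cV[R]_d.

Lemma vnorm_ge0 v : 0 <= vnorm v.
Proof. exact: sqrtr_ge0. Qed.

Lemma vnorm_sq v : vnorm v ^+ 2 = \sum_i v i ord0 ^+ 2.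
Proof. by rewrite sqr_sqrtr//; apply: sumr_ge0 => i _; exact: sqr_ge0. Qed.

Lemma dot_le u v : \sum_i u i ord0 * v i ord0 <= vnorm u * vnorm v.
Proof.
rewrite /vnorm; apply: le_trans (ler_norm _) _.
exact: (CS_abs (fun i => u i ord0) (fun i => v i ord0)).
Qed.

Lemma coord_le v i : `|v i ord0| <= vnorm v.
Proof.
rewrite -sqrtr_sqr ler_sqrt; last by apply: sumr_ge0 => j _; exact: sqr_ge0.
rewrite (bigD1 i)//= lerDl; apply: sumr_ge0 => j _; exact: sqr_ge0.
Qed.

Lemma vnormD u v : vnorm (u + v) <= vnorm u + vnorm v.
Proof.
rewrite -ler_sqr ?nnegrE ?addr_ge0 ?vnorm_ge0//.
rewrite vnorm_sq sqrrD !vnorm_sq.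
have := dot_le u v => h.
have -> : \sum_i (u + v) i ord0 ^+ 2 =
   \sum_i u i ord0 ^+ 2 + 2 * (\sum_i u i ord0 * v i ord0) + \sum_i v i ord0 ^+ 2.
  rewrite mulr_sumr -!big_split /=; apply: eq_bigr => i _; rewrite !mxE; ring.
lra.
Qed.

Lemma vnormZ k v : vnorm (k *: v) = `|k| * vnorm v.
Proof.
rewrite /vnorm -sqrtr_sqr -sqrtrM ?sqr_ge0//; congr Num.sqrt.
rewrite mulr_sumr; apply: eq_bigr => i _; rewrite !mxE; ring.
Qed.

Lemma vnorm0 : vnorm (0 : 'cV[R]_d) = 0.
Proof. by rewrite -(scale0r 0) vnormZ normr0 mul0r. Qed.

Lemma vnormN v : vnorm (- v) = vnorm v.
Proof. by rewrite -scaleN1r vnormZ normrN1 mul1r. Qed.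

Lemma vnorm_eq0 v : vnorm v = 0 -> v = 0.
Proof.
move=> h; apply/matrixP => i j; rewrite (ord1 j) mxE; apply/eqP.
by rewrite -normr_le0 -h coord_le.
Qed.

Lemma vnorm_sum I (r : seq I) (P : pred I) (F : I -> 'cV[R]_d) :
  vnorm (\sum_(i <- r | P i) F i) <= \sum_(i <- r | P i) vnorm (F i).
Proof.
apply: (big_ind2 (fun x y => vnorm x <= y)); first by rewrite vnorm0.
  by move=> x1 x2 y1 y2 h1 h2; apply: le_trans (vnormD _ _) _; exact: lerD.
by [].
Qed.

Lemma vnorm_mul_frob (M : 'M[R]_d) u :
  vnorm (M *m u) <= Num.sqrt (\sum_i \sum_j M i j ^+ 2) * vnorm u.
Proof.
rewrite /vnorm -sqrtrM; last by do 2 (apply: sumr_ge0 => ? _); exact: sqr_ge0.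
rewrite ler_sqrt; last first.
  by apply: mulr_ge0; do ?(apply: sumr_ge0 => ? _); rewrite ?sumr_ge0// => *; exact: sqr_ge0.
rewrite mulr_suml; apply: ler_sum => i _; rewrite mxE.
exact: (CS_sum (fun j => M i j) (fun j => u j ord0)).
Qed.

End CS.


Section Op.
Variable R : realType.
Variable d : nat.
Implicit Types u v w : 'cV[R]_d.

Lemma opnorm_bound (M : 'M[R]_d) u : vnorm (M *m u) <= opnorm M * vnorm u.
Proof.
set S := [set r : R | exists u : 'cV[R]_d, vnorm u <= 1 /\ r = vnorm (M *m u)].
have hs : has_sup S.
  split; first by exists 0; exists 0; rewrite vnorm0 mulmx0 vnorm0.
  exists (Num.sqrt (\sum_i \sum_j M i j ^+ 2)) => r [x [hx ->]].
  apply: le_trans (vnorm_mul_frob _ _ M x) _.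
  by rewrite ler_piMr ?sqrtr_ge0.
have [/vnorm_eq0 ->|nz] := eqVneq (vnorm u) 0.
  by rewrite mulmx0 !vnorm0 mulr0.
have np : 0 < vnorm u by rewrite lt_neqAle eq_sym nz vnorm_ge0.
have hS : S ((vnorm u)^-1 * vnorm (M *m u)).
  exists ((vnorm u)^-1 *: u); rewrite vnormZ ger0_norm ?invr_ge0 ?vnorm_ge0//.
  rewrite mulVf// lexx; split=> //.
  by rewrite -scalemxAr vnormZ ger0_norm ?invr_ge0 ?vnorm_ge0.
have := sup_upper_bound hs hS.
rewrite /opnorm -/S => h.
rewrite -ler_pdivrMr// mulrC; exact: h.
Qed.

Lemma opnorm_ge0 (M : 'M[R]_d) : 0 <= opnorm M.
Proof.
have := opnorm_bound M 0; rewrite mulmx0 vnorm0 mulr0.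
set S := [set r : R | exists u : 'cV[R]_d, vnorm u <= 1 /\ r = vnorm (M *m u)].
have hs : has_sup S.
  split; first by exists 0; exists 0; rewrite vnorm0 mulmx0 vnorm0.
  exists (Num.sqrt (\sum_i \sum_j M i j ^+ 2)) => r [x [hx ->]].
  apply: le_trans (vnorm_mul_frob _ _ M x) _.
  by rewrite ler_piMr ?sqrtr_ge0.
move=> _; apply: (sup_upper_bound hs); exists 0; by rewrite vnorm0 mulmx0 vnorm0.
Qed.

Lemma entry_le (M : 'M[R]_d) i j : `|M i j| <= opnorm M.
Proof.
have h1 : vnorm (delta_mx j 0 : 'cV[R]_d) = 1.
  rewrite /vnorm (bigD1 j)//= big1 ?mxE ?eqxx /= ?expr1n ?addr0 ?sqrtr1//.
  by move=> k /negbTE hk; rewrite mxE hk /= expr0n.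
have := opnorm_bound M (delta_mx j 0); rewrite h1 mulr1 -colE.
apply: le_trans; have := coord_le _ _ (col j M) i; by rewrite mxE.
Qed.

Lemma mulcoord (M : 'M[R]_d) (e : R) u i :
  ((1%:M - e *: M) *m u) i ord0 = u i ord0 - e * \sum_j M i j * u j ord0.
Proof. by rewrite mulmxBl mul1mx -scalemxAl !mxE. Qed.

End Op.


Section Int.
Variables (dm : measure_display) (Z : measurableType dm) (R : realType).
Variable (P : probability Z R).

Definition E (f : Z -> R) := fine (\int[P]_z (f z)%:E).
Definition good (f : Z -> R) :=
  measurable_fun setT f /\ exists B, forall z, `|f z| <= B.

Lemma good_int f : good f -> P.-integrable setT (EFin \o f).
Proof.
move=> [mf [B hB]]; apply: measurable_bounded_integrable => //.
  by apply: (le_lt_trans (probability_le1 P measurableT)); rewrite ltry.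
exists B; split; first exact: num_real.
by move=> M /ltW hM z _ /=; exact: le_trans (hB z) hM.
Qed.

Lemma intE f : good f -> (\int[P]_z (f z)%:E)%E = (E f)%:E.
Proof. by move=> g; rewrite fineK// (integrable_fin_num _ (good_int _ g)). Qed.

Lemma good_cst c : good (fun _ => c).
Proof. by split; [exact: measurable_cst | exists `|c|]. Qed.

Lemma good_lin n c (k : 'I_n -> R) (f : 'I_n -> Z -> R) : (forall i, good (f i)) ->
  good (fun z => c + \sum_i k i * f i z).
Proof.
move=> hg; split.
  apply: measurable_realfun.measurable_funD; first exact: measurable_cst.
  apply: measurable_sum => i; apply: measurable_realfun.measurable_funM; first exact: measurable_cst.
  by case: (hg i).
have [Bf hB] := choice (fun i => (hg i).2).
exists (`|c| + \sum_i `|k i| * Bf i) => z.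
apply: le_trans (ler_normD _ _) _; rewrite lerD2l.
apply: le_trans (ler_norm_sum _ _ _) _; apply: ler_sum => i _.
by rewrite normrM ler_wpM2l.
Qed.

Lemma E_lin n c (k : 'I_n -> R) (f : 'I_n -> Z -> R) : (forall i, good (f i)) ->
  E (fun z => c + \sum_i k i * f i z) = c + \sum_i k i * E (f i).
Proof.
move=> hg.
have h1 : (\int[P]_z ((c + \sum_i k i * f i z)%:E) =
    \int[P]_z ((cst c%:E) z + (fun z => \sum_i ((k i * f i z)%:E)) z))%E.
  by apply: eq_integral => z _; rewrite EFinD sumEFin.
have gk : forall i, good (fun z => k i * f i z).
  move=> i; have := good_lin 1 0 (fun j : 'I_1 => k i) (fun j => f i) (fun=> hg i).
  by under eq_fun do rewrite big_ord1 add0r.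
rewrite /E h1 integralD//; last 2 first.
- exact: (good_int _ (good_cst c)).
- by apply: integrable_sum => // i _; exact: (good_int _ (gk i)).
have P1 : (P [set: Z] = 1)%E by exact: probability_setT.
rewrite integral_cst//.
have P1' : ((P : {measure set Z -> \bar R}) [set: Z] = 1)%E by exact: P1.
rewrite P1' mule1 integral_sum//; last first.
  by move=> i; exact: (good_int _ (gk i)).
rewrite (eq_bigr (fun i => (k i * E (f i))%:E)); last first.
  move=> i _; rewrite EFinM.
  rewrite (_ : (\int[P]_x (k i * f i x)%:E = \int[P]_x ((k i)%:E * (f i x)%:E))%E); last first.
    by apply: eq_integral => z _; rewrite EFinM.
  by rewrite integralZl// ?intE//; exact: (good_int _ (hg i)).
by rewrite sumEFin -EFinD.
Qed.

Lemma E_le f g : good f -> good g -> (forall z, f z <= g z) -> E f <= E g.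
Proof.
move=> gf gg h; rewrite /E; apply: fine_le.
- exact: (integrable_fin_num _ (good_int _ gf)).
- exact: (integrable_fin_num _ (good_int _ gg)).
apply: le_integral => //; [exact: good_int | exact: good_int|].
by move=> z _; rewrite lee_fin.
Qed.

Lemma E_ge0 f : (forall z, 0 <= f z) -> 0 <= E f.
Proof. by move=> h; apply: fine_ge0; apply: integral_ge0 => z _; rewrite lee_fin. Qed.

Lemma meas_vnorm d (F : Z -> 'cV[R]_d) :
  (forall i, measurable_fun setT (fun z => F z i ord0)) ->
  measurable_fun setT (fun z => vnorm (F z)).
Proof.
move=> h; rewrite /vnorm.
apply: (measurableT_comp (measurable_realfun.continuous_measurable_fun (@sqrt_continuous R))).
apply: measurable_sum => i; exact: measurable_realfun.measurable_funM.
Qed.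

End Int.
Arguments E {dm Z R} P f.
Arguments good {dm Z R} f.
Arguments good_int {dm Z R P} f.
Arguments intE {dm Z R P} f.
Arguments good_cst {dm Z R} c.
Arguments good_lin {dm Z R n} c k f.
Arguments E_lin {dm Z R P n} c k f.
Arguments E_le {dm Z R P} f g.
Arguments E_ge0 {dm Z R P} f.
Arguments meas_vnorm {dm Z R d} F.


Lemma young1 (R : realType) (y p : R) : 0 <= y -> 1 <= p -> y <= y `^ p / p + (1 - p^-1).
Proof.
move=> y0 p1.
have [->|pn1] := eqVneq p 1.
  by rewrite powRr1// invr1 mulr1 subrr addr0.
have p1' : 1 < p by rewrite lt_neqAle eq_sym pn1 p1.
have p0 : 0 < p by lra.
set q := p / (p - 1).
have q0 : 0 < q by rewrite /q divr_gt0// subr_gt0.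
have pq : p^-1 + q^-1 = 1.
  by rewrite /q invf_div; field; rewrite gt_eqF.
have := conjugate_powR y0 ler01 p0 q0 pq.
rewrite mulr1 powR1 (_ : 1 / q = 1 - p^-1); [by [] | rewrite div1r; lra].
Qed.

Section Contr.
Variables (dm : measure_display) (Z : measurableType dm) (R : realType).
Variable (P : probability Z R).
Variable d : nat.
Variable A : Z -> 'M[R]_d.

Lemma contr (p e K : R) (u : 'cV[R]_d) :
  (forall i j, measurable_fun setT (fun z => A z i j)) ->
  (exists M, forall z, opnorm (A z) <= M) ->
  1 <= p -> 0 <= e -> 0 < K ->
  powR (E P (fun z => powR (vnorm ((1%:M - e *: A z) *m u)) p)) p^-1 <= K ->
  vnorm ((1%:M - e *: mexp P A) *m u) <= K.
Proof.
move=> mA [M hM] p1 e0 K0 hI.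
have p0 : 0 < p by lra.
set v := fun z => (1%:M - e *: A z) *m u.
set w := (1%:M - e *: mexp P A) *m u.
have gA : forall i j, good (fun z => A z i j).
  move=> i j; split; first exact: mA.
  by exists M => z; apply: le_trans (entry_le _ _ _ _ _) (hM z).
have hvi : forall i, (fun z => v z i ord0) =
    (fun z => u i ord0 + \sum_j (- e * u j ord0) * A z i j).
  move=> i; apply/funext => z; rewrite /v mulcoord mulr_sumr -sumrN.
  by congr (_ + _); apply: eq_bigr => j _; ring.
have gvi : forall i, good (fun z => v z i ord0).
  by move=> i; rewrite hvi; apply: good_lin.
have Ew : forall i, E P (fun z => v z i ord0) = w i ord0.
  move=> i; rewrite hvi E_lin// /w mulcoord mulr_sumr -sumrN.
  by congr (_ + _); apply: eq_bigr => j _; rewrite mxE /E; ring.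
set Bv := (1 + e * M) * vnorm u.
have hBv : forall z, vnorm (v z) <= Bv.
  move=> z; rewrite /v /Bv mulmxBl mul1mx -scalemxAl.
  apply: le_trans (vnormD _ _ _ _) _; rewrite vnormN vnormZ ger0_norm//.
  rewrite mulrDl mul1r lerD2l -mulrA ler_wpM2l//.
  apply: le_trans (opnorm_bound _ _ _ _) _.
  by rewrite ler_wpM2r ?vnorm_ge0.
have mv : measurable_fun setT (fun z => vnorm (v z)).
  by apply: meas_vnorm => i; case: (gvi i).
have Bv0 : 0 <= Bv by apply: le_trans (hBv point) ; exact: vnorm_ge0.
have gn : good (fun z => vnorm (v z) `^ p).
  split; first exact: (measurableT_comp (measurable_realfun.measurable_powR p) mv).
  exists (Bv `^ p) => z; rewrite ger0_norm ?powR_ge0//.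
  by apply: ge0_ler_powR; rewrite ?nnegrE ?vnorm_ge0 ?hBv//; lra.
set I := E P (fun z => vnorm (v z) `^ p).
have I0 : 0 <= I by apply: E_ge0 => z; exact: powR_ge0.
have IK : I <= K `^ p.
  have -> : I = (I `^ p^-1) `^ p.
    by rewrite -powRrM mulVf ?powRr1// gt_eqF.
  by apply: ge0_ler_powR; rewrite ?nnegrE ?powR_ge0//; lra.
set c := K^-1 `^ p.
have c0 : 0 <= c by exact: powR_ge0.
have cK : c * K `^ p = 1.
  by rewrite /c -powRM ?invr_ge0 1?ltW// mulVf ?gt_eqF// powR1.
set W := vnorm w.
have W0 : 0 <= W by exact: vnorm_ge0.
have hy : forall z, vnorm (v z) <= K * ((vnorm (v z) `^ p * c) / p + (1 - p^-1)).
  move=> z; have := young1 _ _ _ (divr_ge0 (vnorm_ge0 _ _ (v z)) (ltW K0)) p1.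
  rewrite powRM; last 2 first; [exact: vnorm_ge0 | by rewrite invr_ge0 ltW|].
  rewrite -/c => h.
  have Kn : K != 0 by rewrite gt_eqF.
  rewrite -{1}(divfK Kn (vnorm (v z))) mulrC; by rewrite ler_pM2l.
have step1 : W ^+ 2 = E P (fun z => 0 + \sum_i w i ord0 * v z i ord0).
  rewrite E_lin// add0r /W vnorm_sq; apply: eq_bigr => i _.
  by rewrite Ew expr2.
have step2 : E P (fun z => 0 + \sum_i w i ord0 * v z i ord0) <=
    E P (fun z => W * K * (1 - p^-1) + \sum_(i < 1) (W * K * c / p) * vnorm (v z) `^ p).
  apply: E_le; [exact: good_lin | exact: good_lin|] => z.
  rewrite add0r big_ord1.
  apply: le_trans (dot_le _ _ _ _) _; rewrite -/W.
  apply: le_trans (ler_wpM2l W0 (hy z)) _.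
  rewrite le_eqVlt; apply/orP; left; apply/eqP; field; lra.
rewrite [X in _ <= X]E_lin// big_ord1 -/I in step2.
have : W ^+ 2 <= W * K.
  rewrite step1; apply: le_trans step2 _.
  have : W * K * c / p * I <= W * K * c / p * K `^ p.
    by apply: ler_wpM2l => //; apply: divr_ge0; [apply: mulr_ge0; [apply: mulr_ge0|]|]; lra.
  have -> : W * K * c / p * K `^ p = W * K / p.
    by rewrite -mulrA (mulrC _ (K `^ p)) mulrA -(mulrA _ c) cK mulr1.
  move=> h.
  have hh : W * K * (1 - p^-1) + W * K / p = W * K by field; rewrite gt_eqF.
  lra.
have [->|Wn] := eqVneq W 0; first by move=> _; exact: ltW.
have Wp : 0 < W by rewrite lt_neqAle eq_sym Wn W0.
by rewrite expr2 ler_pM2l.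
Qed.

End Contr.


Section Alg.
Variable R : realType.
Variable d : nat.

Lemma key_sq (B : 'M[R]_d) (u : 'cV[R]_d) e :
  vnorm ((1%:M - e *: B) *m u) ^+ 2 =
  \sum_i u i ord0 ^+ 2 - 2 * e * (\sum_i u i ord0 * (B *m u) i ord0)
  + e ^+ 2 * \sum_i (B *m u) i ord0 ^+ 2.
Proof.
rewrite vnorm_sq !mulr_sumr -sumrB -big_split /=; apply: eq_bigr => i _.
rewrite mulcoord (mxE _ _ i ord0). ring.
Qed.

Lemma ext_contr (B : 'M[R]_d) (u : 'cV[R]_d) (eta0 : R) : 0 < eta0 ->
  (forall e, 0 < e < eta0 -> vnorm ((1%:M - e *: B) *m u) <= vnorm u) ->
  forall e, 0 < e <= eta0 -> vnorm ((1%:M - e *: B) *m u) <= vnorm u.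
Proof.
move=> h0 h e /andP[e0]; rewrite le_eqVlt => /orP[/eqP ->|elt]; last by apply: h; rewrite e0.
set S := \sum_i u i ord0 ^+ 2.
set al := \sum_i u i ord0 * (B *m u) i ord0.
set be := \sum_i (B *m u) i ord0 ^+ 2.
have H : forall e', 0 < e' < eta0 -> e' * be <= 2 * al.
  move=> e' /andP[e'0 e'lt]; have := h e'; rewrite e'0 e'lt => /(_ isT) hh.
  rewrite -ler_sqr ?nnegrE ?vnorm_ge0// key_sq vnorm_sq -/S -/al -/be in hh.
  have : e' * (e' * be - 2 * al) <= 0 by lra.
  by rewrite pmulr_rle0// subr_le0.
rewrite -ler_sqr ?nnegrE ?vnorm_ge0// key_sq vnorm_sq -/S -/al -/be.
rewrite leNgt; apply/negP => hc.
have hc' : 2 * al < eta0 * be.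
  have : 0 < eta0 * (eta0 * be - 2 * al) by nra.
  by rewrite pmulr_rgt0// subr_gt0.
have [be0|bep] := lerP be 0.
  have := H (eta0 / 2); rewrite divr_gt0// ltr_pdivrMr// ltr_pMr// ltr1n => /(_ isT).
  nra.
set del := eta0 * be - 2 * al.
have delp : 0 < del by rewrite subr_gt0.
have [e1p|e1n] := ltrP 0 (eta0 - del / (2 * be)).
  have := H (eta0 - del / (2 * be)); rewrite e1p /= gtrBl divr_gt0 ?mulr_gt0// => /(_ isT).
  rewrite mulrBl (_ : del / (2 * be) * be = del / 2); last by field; rewrite gt_eqF.
  rewrite /del; lra.
have h2 : eta0 * (2 * be) <= del.
  by rewrite subr_le0 ler_pdivlMr ?mulr_gt0// in e1n.
have := H (eta0 / 2); rewrite divr_gt0// ltr_pdivrMr// ltr_pMr// ltr1n => /(_ isT).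
rewrite /del in h2; nra.
Qed.

Lemma avg_contr N (X : 'I_N -> 'M[R]_d) : (0 < N)%N ->
  (forall c u, vnorm (X c *m u) <= vnorm u) ->
  forall u, vnorm ((N%:R^-1 *: \sum_c X c) *m u) <= vnorm u.
Proof.
move=> N0 h u.
rewrite -scalemxAl mulmx_suml vnormZ ger0_norm ?invr_ge0//.
apply: le_trans; first by apply: ler_wpM2l; [by rewrite invr_ge0| exact: vnorm_sum].
apply: le_trans; first by apply: ler_wpM2l; [by rewrite invr_ge0| apply: ler_sum => c _; exact: h].
rewrite sumr_const card_ord -[vnorm u *+ N]mulr_natl mulrA mulVf ?mul1r//.
by rewrite pnatr_eq0 -lt0n.
Qed.

Lemma avg_id N (Ab : 'I_N -> 'M[R]_d) e : (0 < N)%N ->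
  N%:R^-1 *: \sum_c (1%:M - e *: Ab c) = 1%:M - e *: (N%:R^-1 *: \sum_c Ab c).
Proof.
move=> N0; rewrite sumrB sumr_const card_ord scalerBr -scaler_sumr.
rewrite -scalerMnr scalerMnl -[N%:R^-1 *+ N]mulr_natr mulVf ?pnatr_eq0 -?lt0n// scale1r.
by rewrite !scaler_sumr; congr (_ - _); apply: eq_bigr => c _; rewrite !scalerA mulrC.
Qed.

Lemma pow_contr (Y : 'M[R]_d) : (forall u, vnorm (Y *m u) <= vnorm u) ->
  forall j u, vnorm (Y ^+ j *m u) <= vnorm u.
Proof.
move=> h; elim=> [|j IH] u; first by rewrite expr0 -idmxE mul1mx.
by rewrite exprS -mulmxE -mulmxA; apply: le_trans (h _) (IH u).
Qed.

Lemma pow_diff (X Y : 'M[R]_d) k : 0 <= k ->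
  (forall u, vnorm (X *m u) <= vnorm u) -> (forall u, vnorm (Y *m u) <= vnorm u) ->
  (forall u, vnorm ((X - Y) *m u) <= k * vnorm u) ->
  forall j v, vnorm ((X ^+ j - Y ^+ j) *m v) <= j%:R * k * vnorm v.
Proof.
move=> k0 hX hY hXY; elim=> [|j IH] v.
  by rewrite !expr0 subrr mul0mx vnorm0 !mul0r.
have -> : X ^+ j.+1 - Y ^+ j.+1 = X * (X ^+ j - Y ^+ j) + (X - Y) * Y ^+ j.
  by rewrite !exprS mulrBr mulrBl addrA subrK.
rewrite mulmxDl -!mulmxE -!mulmxA.
apply: le_trans (vnormD _ _ _ _) _.
have h1 : vnorm (X *m ((X ^+ j - Y ^+ j) *m v)) <= j%:R * k * vnorm v.
  exact: le_trans (hX _) (IH v).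
have h2 : vnorm ((X - Y) *m (Y ^+ j *m v)) <= k * vnorm v.
  exact: le_trans (hXY _) (ler_wpM2l k0 (pow_contr _ hY j v)).

apply: le_trans (lerD h1 h2) _.
by rewrite -[j.+1]addn1 natrD; lra.
Qed.

Lemma sum_j h : \sum_(j < h) (j%:R : R) <= (h%:R) ^+ 2 / 2.
Proof.
elim: h => [|h IH]; first by rewrite big_ord0 mulr_ge0 ?sqr_ge0 ?invr_ge0.
rewrite big_ord_recr /= -[h.+1]addn1 natrD; lra.
Qed.

Lemma avg_CS N (o n : 'I_N -> R) :
  N%:R^-1 * \sum_c o c * n c <=
  Num.sqrt (N%:R^-1 * \sum_c n c ^+ 2) * Num.sqrt (N%:R^-1 * \sum_c o c ^+ 2).
Proof.
rewrite !sqrtrM ?invr_ge0//.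
set a := Num.sqrt N%:R^-1.
have aa : a * a = N%:R^-1 by rewrite -expr2 sqr_sqrtr ?invr_ge0.
rewrite -aa.
have h := le_trans (ler_norm _) (CS_abs _ o n).
have a0 : 0 <= a * a by rewrite aa invr_ge0.
have := ler_wpM2l a0 h.
set X := Num.sqrt (\sum_c o c ^+ 2); set Y := Num.sqrt (\sum_c n c ^+ 2).
move=> hh; apply: le_trans hh _; rewrite le_eqVlt; apply/orP; left; apply/eqP; ring.
Qed.

End Alg.


Theorem lemma2 (R : realType) (N d : nat) (dm : measure_display)
  (Z : measurableType dm) (pi : 'I_N -> probability Z R)
  (A : 'I_N -> Z -> 'M[R]_d) (b : 'I_N -> Z -> 'cV[R]_d)
  (theta_star : 'cV[R]_d) (theta_c : 'I_N -> 'cV[R]_d)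
  (p a eta_inf : R) (eta : nat -> R) (H : nat -> nat) (t : nat) :
  let Abar c := mexp (pi c) (A c) in
  let bbar c := mexp (pi c) (b c) in
  let Abar_avg := N%:R^-1 *: \sum_(c < N) Abar c in
  let bbar_avg := N%:R^-1 *: \sum_(c < N) bbar c in
  let eps c z := (A c z - Abar c) *m theta_c c - (b c z - bbar c) in
  let zeta1 := Num.sqrt (N%:R^-1 *
      \sum_(c < N) vnorm (Abar c *m (theta_c c - theta_star)) ^+ 2) in
  let zeta2 := Num.sqrt (N%:R^-1 *
      \sum_(c < N) opnorm (Abar c - Abar_avg) ^+ 2) in
  let rho := N%:R^-1 *: \sum_(c < N)
      ((1%:M - (1%:M - eta t *: Abar c) ^+ H t) *m (theta_c c - theta_star)) in
  (0 < N)%N ->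
  (* theta_star and theta_c solve the defining linear systems *)
  Abar_avg *m theta_star = bbar_avg ->
  (forall c, Abar c *m theta_c c = bbar c) ->
  (* Assumption A2 (measurability and uniform boundedness) *)
  (forall c i j, measurable_fun [set: Z] (fun z => A c z i j)) ->
  (forall c i j, measurable_fun [set: Z] (fun z => b c z i j)) ->
  (exists M : R, forall c z,
      vnorm (eps c z) <= M /\ opnorm (A c z) <= M /\
      opnorm (A c z - Abar c) <= M) ->
  (* Assumption A1(p) *)
  1 <= p ->
  (forall c, hurwitz (- Abar c)) ->
  0 < a -> 0 < eta_inf -> eta_inf * a <= 1 / 2 ->
  (forall c (e : R) (u : 'cV[R]_d), 0 < e < eta_inf ->
      powR (fine (\int[pi c]_z
              ((powR (vnorm ((1%:M - e *: A c z) *m u)) p)%:E))) p^-1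
        <= (1 - e * a) * vnorm u) ->
  (* step sizes *)
  (forall s, 0 < eta s <= eta_inf) ->
  (1 <= t)%N ->
  vnorm rho <= (eta t ^+ 2 * (H t)%:R ^+ 2 / 2) * zeta1 * zeta2.
Proof.
move=> Abar bbar Abar_avg bbar_avg eps zeta1 zeta2 rho N0 hstar hc mA mb [M hM]
  p1 hurw a0 ei0 eia hA1 heta t1.
set e := eta t; set h := H t.
have /andP[e0 eei] := heta t.
have hXc : forall c u, vnorm ((1%:M - e *: Abar c) *m u) <= vnorm u.
  move=> c u; apply: (@ext_contr R d (Abar c) u eta_inf ei0); last by rewrite e0 eei.
  move=> e' /andP[e'0 e'lt].
  have [/vnorm_eq0 ->|un] := eqVneq (vnorm u) 0; first by rewrite mulmx0.
  have up : 0 < vnorm u by rewrite lt_neqAle eq_sym un vnorm_ge0.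
  have ea : e' * a < eta_inf * a by rewrite ltr_pM2r.
  set K := (1 - e' * a) * vnorm u.
  have Kp : 0 < K by rewrite /K mulr_gt0//; lra.
  apply: (le_trans (@contr _ _ _ (pi c) _ (A c) p e' K u (mA c) _ p1 (ltW e'0) Kp _)).
  - by exists M => z; case: (hM c z) => _ [].
  - by apply: hA1; rewrite e'0 e'lt.
  rewrite /K; have : 0 <= e' * a by rewrite mulr_ge0// ltW.
  have := vnorm_ge0 _ _ u; nra.
have hY : forall u, vnorm ((1%:M - e *: Abar_avg) *m u) <= vnorm u.
  move=> u; rewrite /Abar_avg -(avg_id _ _ _ Abar e N0).
  exact: (@avg_contr R d N (fun c => 1%:M - e *: Abar c) N0 hXc u).
set g := fun c => Abar c *m (theta_c c - theta_star).
have hg0 : \sum_c g c = 0.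
  have e1 : \sum_c Abar c *m theta_c c = \sum_c bbar c by apply: eq_bigr => c _; exact: hc.
  have e2 : N%:R^-1 *: \sum_c bbar c = N%:R^-1 *: ((\sum_c Abar c) *m theta_star).
    by rewrite scalemxAl; symmetry; exact: hstar.
  have Nn : N%:R != 0 :> R by rewrite pnatr_eq0 -lt0n.
  have e3 : \sum_c bbar c = (\sum_c Abar c) *m theta_star.
    by have := congr1 (fun x => N%:R *: x) e2; rewrite !scalerA mulfV// !scale1r.
  rewrite /g; under eq_bigr do rewrite mulmxBr.
  by rewrite sumrB e1 e3 mulmx_suml subrr.
set Y := 1%:M - e *: Abar_avg.
have hdec : forall c, (1%:M - (1%:M - e *: Abar c) ^+ h) *m (theta_c c - theta_star)
   = e *: \sum_(j < h) ((1%:M - e *: Abar c) ^+ j *m g c).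
  move=> c; set X := 1%:M - e *: Abar c.
  have hX : 1%:M - X = e *: Abar c by rewrite /X opprB addrC subrK.
  have tel : 1%:M - X ^+ h = \sum_(j < h) (X ^+ j * (1%:M - X)).
    rewrite (eq_bigr (fun j : 'I_h => - (X ^+ j.+1 - X ^+ j))); last first.
      by move=> j _; rewrite idmxE mulrBr mulr1 -exprSr opprB.
    rewrite sumrN -(big_mkord xpredT (fun j => X ^+ j.+1 - X ^+ j)).
    by rewrite telescope_sumr// expr0 opprB idmxE.
  rewrite tel mulmx_suml scaler_sumr; apply: eq_bigr => j _.
  by rewrite hX -mulmxE -mulmxA -scalemxAl -scalemxAr.
have hrho : rho = (N%:R^-1 * e) *: \sum_c \sum_(j < h)
    (((1%:M - e *: Abar c) ^+ j - Y ^+ j) *m g c).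
  have hz : \sum_c \sum_(j < h) (Y ^+ j *m g c) = 0.
    by rewrite exchange_big big1 // => j _; rewrite -mulmx_sumr hg0 mulmx0.
  rewrite /rho (eq_bigr _ (fun c _ => hdec c)) -scalerA -scaler_sumr; congr (_ *: _).
  congr (_ *: _).
  under [RHS]eq_bigr do under eq_bigr do rewrite mulmxBl.
  under [RHS]eq_bigr do rewrite sumrB.
  by rewrite sumrB hz subr0.
set o := fun c => opnorm (Abar c - Abar_avg).
set n := fun c => vnorm (g c).
have hb : vnorm (\sum_c \sum_(j < h) (((1%:M - e *: Abar c) ^+ j - Y ^+ j) *m g c))
    <= \sum_c \sum_(j < h) (j%:R * (e * o c) * n c).
  apply: le_trans (vnorm_sum _ _ _ _ _ _) _; apply: ler_sum => c _.
  apply: le_trans (vnorm_sum _ _ _ _ _ _) _; apply: ler_sum => j _.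
  apply: pow_diff => //; first by apply: mulr_ge0; [exact: ltW | exact: opnorm_ge0].
  move=> w.
  have -> : 1%:M - e *: Abar c - Y = - (e *: (Abar c - Abar_avg)).
    by rewrite /Y scalerBr !opprB addrC addrA subrK.
  rewrite mulNmx vnormN -scalemxAl vnormZ ger0_norm; last exact: ltW.
  rewrite -mulrA; apply: ler_wpM2l; [exact: ltW | exact: opnorm_bound].
have hs : \sum_c \sum_(j < h) (j%:R * (e * o c) * n c)
    = e * (\sum_(j < h) (j%:R : R)) * \sum_c o c * n c.
  rewrite [RHS]mulr_sumr; apply: eq_bigr => c _.
  by rewrite mulr_sumr mulr_suml; apply: eq_bigr => j _; ring.
have o0 : forall c, 0 <= o c by move=> c; exact: opnorm_ge0.
have n0 : forall c, 0 <= n c by move=> c; exact: vnorm_ge0.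
have hT := sum_j R h.
have T0 : 0 <= \sum_(j < h) (j%:R : R) by apply: sumr_ge0.
have hQ := avg_CS R N o n.
have Q0 : 0 <= \sum_c o c * n c by apply: sumr_ge0 => c _; exact: mulr_ge0.
have z10 : 0 <= zeta1 by exact: sqrtr_ge0.
have z20 : 0 <= zeta2 by exact: sqrtr_ge0.
rewrite hrho vnormZ ger0_norm; last by apply: mulr_ge0; [rewrite invr_ge0 | exact: ltW].
apply: le_trans (ler_wpM2l _ hb) _; first by apply: mulr_ge0; [rewrite invr_ge0 | exact: ltW].
rewrite hs.
set T := \sum_(j < h) (j%:R : R) in hT T0 *.
set Q := \sum_c o c * n c in hQ Q0 *.
rewrite -/zeta1 -/zeta2 in hQ.
have Ni0 : 0 <= N%:R^-1 :> R by rewrite invr_ge0.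
have hQ' : N%:R^-1 * Q <= zeta1 * zeta2 by exact: hQ.
have : N%:R^-1 * e * (e * T * Q) = e ^+ 2 * T * (N%:R^-1 * Q) by ring.
move=> ->.
have e20 : 0 <= e ^+ 2 by exact: sqr_ge0.
apply: le_trans (ler_wpM2l (mulr_ge0 e20 T0) hQ') _.
apply: le_trans (ler_wpM2r (mulr_ge0 z10 z20) (ler_wpM2l e20 hT)) _.
rewrite le_eqVlt; apply/orP; left; apply/eqP; ring.
Qed.
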